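(* Let $C=\mathbb{C}\langle x,y,z\rangle/(x^2,y^2,z^2,[\{x,y\},z],[\{y,z\},x])$, let $\lambda$ be a primitive $n$th root of unity, and let $\mathbb{Z}_n=\langle\sigma\rangle$ act on $C$ by $\sigma(x)=\lambda^{-1}x$, $\sigma(y)=y$, $\sigma(z)=\lambda z$. In the smash product $C\#\mathbb{Z}_n$ put $x'=x\#1$ and $z'=z\#\sigma^{-1}$. Then $(x'z'+z'x')^n$ belongs to the center of $C\#\mathbb{Z}_n$.
   Context: $\{a,b\}=ab+ba$, $[a,b]=ab-ba$. The smash product $C\#\mathbb{Z}_n$ is $C\otimes\mathbb{C}\mathbb{Z}_n$ with multiplication $(a\#\sigma^i)(b\#\sigma^j)=a\,\sigma^i(b)\#\sigma^{i+j}$. *)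

(* Defs.v *)
From mathcomp Require Import all_boot all_algebra.
From mathcomp Require Import complex Rstruct.
Set Implicit Arguments. Unset Strict Implicit. Unset Printing Implicit Defensive.
Import GRing.Theory.
Local Open Scope ring_scope.

Notation CC := (Rdefinitions.R[i]).

Section Smash.
Variable K : fieldType.

(* An element of the free algebra is represented by a
   finite formal sum of terms (coefficient, word); two representations denote
   the same element iff they have the same coefficient function [fa_coef]. *)
Definition word := seq 'I_3.
Definition FA := seq (K * word).

Definition gx : 'I_3 := @Ordinal 3 0 isT.
Definition gy : 'I_3 := @Ordinal 3 1 isT.
Definition gz : 'I_3 := @Ordinal 3 2 isT.

Definition fa_coef (p : FA) (w : word) : K := \sum_(t <- p | t.2 == w) t.1.
Definition fa_zero : FA := [::].
Definition fa_one : FA := [:: (1, [::])].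
Definition fa_gen (i : 'I_3) : FA := [:: (1, [:: i])].
Definition fa_add (p q : FA) : FA := p ++ q.
Definition fa_opp (p : FA) : FA := [seq (- t.1, t.2) | t <- p].
Definition fa_sub (p q : FA) : FA := fa_add p (fa_opp q).
Definition fa_mul (p q : FA) : FA := [seq (t.1 * u.1, t.2 ++ u.2) | t <- p, u <- q].
Definition fa_sum (s : seq FA) : FA := flatten s.

Definition fa_anticomm (a b : FA) : FA := fa_add (fa_mul a b) (fa_mul b a).
Definition fa_comm (a b : FA) : FA := fa_sub (fa_mul a b) (fa_mul b a).

Definition C_rel (r : 'I_5) : FA :=
  match val r with
  | 0 => fa_mul (fa_gen gx) (fa_gen gx)
  | 1 => fa_mul (fa_gen gy) (fa_gen gy)
  | 2 => fa_mul (fa_gen gz) (fa_gen gz)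
  | 3 => fa_comm (fa_anticomm (fa_gen gx) (fa_gen gy)) (fa_gen gz)
  | _ => fa_comm (fa_anticomm (fa_gen gy) (fa_gen gz)) (fa_gen gx)
  end.

Definition in_C_ideal (p : FA) : Prop :=
  exists s : seq (FA * 'I_5 * FA),
    forall w, fa_coef p w =
      fa_coef (fa_sum [seq fa_mul (fa_mul t.1.1 (C_rel t.1.2)) t.2 | t <- s]) w.

Definition C_eq (p q : FA) : Prop := in_C_ideal (fa_sub p q).

Variables (n : nat) (lam : K).

(* sigma^i acts on the free algebra by the algebra automorphism
   x |-> lam^-i x, y |-> y, z |-> lam^i z; on a word w it multiplies by
   lam^(i * #z(w)) / lam^(i * #x(w)).  It preserves the ideal, hence acts on C. *)
Definition sigma_pow (i : nat) (p : FA) : FA :=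
  [seq (t.1 * (lam ^+ (i * count_mem gz t.2) / lam ^+ (i * count_mem gx t.2)), t.2)
  | t <- p].

(* An element  sum_{k<n} a_k # sigma^k  is represented by  a : nat -> FA, of
   which only the components k < n matter. *)
Definition SM := nat -> FA.

Definition sm_eq (a b : SM) : Prop := forall k, (k < n)%N -> C_eq (a k) (b k).

(* (a # sigma^i)(b # sigma^j) = a sigma^i(b) # sigma^(i+j). *)
Definition sm_mul (a b : SM) : SM := fun k =>
  fa_sum [seq fa_mul (a i) (sigma_pow i (b j))
         | i <- iota 0 n, j <- [seq j <- iota 0 n | ((i + j) %% n == k)%N]].

Definition sm_one : SM := fun k => if k == 0%N then fa_one else fa_zero.
Definition sm_add (a b : SM) : SM := fun k => fa_add (a k) (b k).
Definition sm_pow (a : SM) (m : nat) : SM := iter m (sm_mul a) sm_one.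

Definition sm_pure (c : FA) (k : nat) : SM := fun l => if l == k then c else fa_zero.

Definition sm_central (w : SM) : Prop :=
  forall v : SM, sm_eq (sm_mul w v) (sm_mul v w).

(* x' = x # 1 and z' = z # sigma^{-1} = z # sigma^(n-1) *)
Definition x' : SM := sm_pure (fa_gen gx) 0.
Definition z' : SM := sm_pure (fa_gen gz) (n.-1).

End Smash.

(* Main.v *)
From HB Require Import structures.
Require Import Defs.
From mathcomp Require Import all_boot all_algebra.
From mathcomp Require Import complex Rstruct.
From mathcomp Require Import finmap.
From mathcomp.multinomials Require Import monalg.
Set Implicit Arguments. Unset Strict Implicit. Unset Printing Implicit Defensive.
Import GRing.Theory.
Local Open Scope ring_scope.


Definition wordM := seq 'I_3.
HB.instance Definition _ := Choice.on wordM.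
Lemma wunit (x y : wordM) : x ++ y = [::] -> x = [::] /\ y = [::].
Proof. by case: x => //; case: y. Qed.
HB.instance Definition _ := Choice_isMonomialDef.Build wordM
  (@catA _) (@cat0s _) (@cats0 _) wunit.

Section S.
Variable F : fieldType.
Notation M := {malg F[wordM]}.

Definition phi (p : FA F) : M := \sum_(t <- p) << t.1 *g (t.2 : wordM) >>.

Lemma phi_coef p w : (phi p)@_w = fa_coef p w.
Proof.
rewrite /phi /fa_coef raddf_sum [RHS]big_mkcond /=; apply: eq_bigr => t _.
by rewrite mcoeffU mulrb.
Qed.

Lemma phi_cat p q : phi (p ++ q) = phi p + phi q.
Proof. by rewrite /phi big_cat. Qed.

Lemma phi_opp p : phi (fa_opp p) = - phi p.
Proof. by rewrite /phi big_map -sumrN; apply: eq_bigr => t _; rewrite monalgUN. Qed.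

Lemma UU (a b : F) (u v : wordM) : << a *g u >> * << b *g v >> = << a * b *g (u ++ v : wordM) >>.
Proof. exact: fgmulUU. Qed.

Lemma phi_mul p q : phi (fa_mul p q) = phi p * phi q.
Proof.
rewrite /phi /fa_mul big_allpairs_dep mulr_suml; apply: eq_bigr => t _.
by rewrite mulr_sumr; apply: eq_bigr => u _; rewrite UU.
Qed.
Lemma phi_sum s : phi (fa_sum s) = \sum_(p <- s) phi p.
Proof. elim: s => [|p s IH]; first by rewrite big_nil /phi big_nil.
by rewrite big_cons /fa_sum /= phi_cat -IH. Qed.

Definition psi (g : M) : FA F := [seq (g@_k, (k : word)) | k <- msupp g].
Lemma phiK g : phi (psi g) = g.
Proof. by rewrite /phi big_map [RHS]monalgE. Qed.

Lemma phi_one : phi (fa_one F) = 1.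
Proof. by rewrite /phi big_seq1. Qed.

Lemma phi0 : phi (fa_zero F) = 0.
Proof. by rewrite /phi big_nil. Qed.

Definition R (r : 'I_5) : M := phi (C_rel F r).

Definition J (g : M) := exists s : seq (M * 'I_5 * M),
  g = \sum_(t <- s) t.1.1 * R t.1.2 * t.2.

Lemma J_C p : J (phi p) -> in_C_ideal p.
Proof.
case=> s Hs; exists [seq (psi t.1.1, t.1.2, psi t.2) | t <- s] => w.
rewrite -!phi_coef phi_sum big_map big_map Hs; congr mcoeff.
by apply: eq_bigr => t _; rewrite !phi_mul !phiK.
Qed.

Lemma J_Ceq p q : J (phi p - phi q) -> C_eq p q.
Proof. by move=> H; apply: J_C; rewrite /fa_sub phi_cat phi_opp. Qed.

Lemma J0 : J 0.
Proof. by exists [::]; rewrite big_nil. Qed.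
Lemma JD g h : J g -> J h -> J (g + h).
Proof. by case=> s -> [t ->]; exists (s ++ t); rewrite big_cat. Qed.
Lemma JN g : J g -> J (- g).
Proof. case=> s ->; exists [seq (- t.1.1, t.1.2, t.2) | t <- s].
by rewrite big_map -sumrN; apply: eq_bigr => t _; rewrite !mulNr. Qed.
Lemma JB g h : J g -> J h -> J (g - h).
Proof. by move=> ? ?; apply: JD => //; apply: JN. Qed.
Lemma JMl a g : J g -> J (a * g).
Proof. case=> s ->; exists [seq (a * t.1.1, t.1.2, t.2) | t <- s].
by rewrite big_map mulr_sumr; apply: eq_bigr => t _; rewrite !mulrA. Qed.
Lemma JMr g a : J g -> J (g * a).
Proof. case=> s ->; exists [seq (t.1.1, t.1.2, t.2 * a) | t <- s].
by rewrite big_map mulr_suml; apply: eq_bigr => t _; rewrite !mulrA. Qed.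
Lemma JR r : J (R r).
Proof. by exists [:: (1, r, 1)]; rewrite big_seq1 mul1r mulr1. Qed.
Lemma JZ c g : J g -> J (c *: g).
Proof. by move=> Hg; rewrite -mul_malgC; apply: JMl. Qed.
Section Sig.
Variable lam : F.
Definition cc (i : nat) (w : word) : F :=
  lam ^+ (i * count_mem gz w) / lam ^+ (i * count_mem gx w).

Lemma sig_coef i p w : fa_coef (sigma_pow lam i p) w = cc i w * fa_coef p w.
Proof.
rewrite /fa_coef big_map mulr_sumr /=; apply: eq_bigr => t /eqP <-.
by rewrite mulrC.
Qed.

Definition Sg i (g : M) : M := phi (sigma_pow lam i (psi g)).

Lemma Sg_coef i g w : (Sg i g)@_w = cc i w * g@_w.
Proof. by rewrite /Sg phi_coef sig_coef -phi_coef phiK. Qed.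

Lemma phi_sig i p : phi (sigma_pow lam i p) = Sg i (phi p).
Proof. by apply/malgP => w; rewrite Sg_coef !phi_coef sig_coef. Qed.

Lemma cc_cat i u v : cc i (u ++ v) = cc i u * cc i v.
Proof.
rewrite /cc !count_cat !mulnDr !exprD invfM.
by rewrite mulrACA.
Qed.

Lemma sig_mul i p q : sigma_pow lam i (fa_mul p q) =
  fa_mul (sigma_pow lam i p) (sigma_pow lam i q).
Proof.
rewrite /sigma_pow /fa_mul.
elim: p => [|t p IH] //=; rewrite map_cat IH; congr (_ ++ _).
rewrite -!map_comp; apply: eq_map => u /=.
move: (cc_cat i t.2 u.2); rewrite /cc => ->; by rewrite mulrACA.
Qed.

Lemma SgM i g h : Sg i (g * h) = Sg i g * Sg i h.
Proof.
have -> : Sg i (g * h) = phi (sigma_pow lam i (fa_mul (psi g) (psi h))).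
  by rewrite phi_sig phi_mul !phiK.
by rewrite sig_mul phi_mul !phi_sig !phiK.
Qed.

Lemma SgD i g h : Sg i (g + h) = Sg i g + Sg i h.
Proof. by apply/malgP => w; rewrite mcoeffD !Sg_coef mcoeffD mulrDr. Qed.
Lemma SgZ i c g : Sg i (c *: g) = c *: Sg i g.
Proof. by apply/malgP => w; rewrite mcoeffZ !Sg_coef mcoeffZ mulrCA. Qed.
Lemma Sg0 i : Sg i 0 = 0.
Proof. by apply/malgP => w; rewrite Sg_coef !mcoeff0 mulr0. Qed.
Lemma Sg1 i : Sg i 1 = 1.
Proof. by rewrite -phi_one -phi_sig /sigma_pow /= /cc /= !muln0 expr0 divr1 mul1r. Qed.
Lemma SgX i g m : Sg i (g ^+ m) = (Sg i g) ^+ m.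
Proof. by elim: m => [|m IH]; rewrite ?expr0 ?Sg1 // !exprS SgM IH. Qed.
Lemma Sg_0 g : Sg 0 g = g.
Proof. by apply/malgP => w; rewrite Sg_coef /cc !mul0n expr0 divr1 mul1r. Qed.
End Sig.
End S.
Section Sm.
Variables (F : fieldType) (n : nat) (lam : F).
Notation M := {malg F[wordM]}.
Notation phi := (@phi F).
Notation Sg := (@Sg F lam).

Lemma phi_sm_mul a b k : phi (sm_mul n lam a b k) =
  \sum_(i <- iota 0 n) \sum_(j <- iota 0 n | ((i + j) %% n == k)%N)
     phi (a i) * Sg i (phi (b j)).
Proof.
rewrite /sm_mul phi_sum big_allpairs_dep; apply: eq_bigr => i _.
by rewrite big_filter; apply: eq_bigr => j _; rewrite phi_mul phi_sig.
Qed.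

Definition pureM (a : SM F) i0 (A : M) :=
  forall i, (i < n)%N -> phi (a i) = if i == i0 then A else 0.

Lemma pure_mul a b i0 j0 A B : (i0 < n)%N -> (j0 < n)%N ->
  pureM a i0 A -> pureM b j0 B ->
  pureM (sm_mul n lam a b) ((i0 + j0) %% n)%N (A * Sg i0 B).
Proof.
move=> i0n j0n Ha Hb k kn; rewrite phi_sm_mul.
rewrite (bigD1_seq i0) ?iota_uniq ?mem_iota //=.
rewrite [X in _ + X]big1_seq ?addr0; last first.
  move=> i /andP[ii0 ]; rewrite mem_iota add0n => iin.
  by apply: big1 => j _; rewrite Ha // (negbTE ii0) mul0r.
rewrite big_mkcond (bigD1_seq j0) ?iota_uniq ?mem_iota //=.
rewrite [X in _ + X]big1_seq ?addr0; last first.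
  move=> j /andP[jj0 ]; rewrite mem_iota add0n => jn.
  by rewrite Hb // (negbTE jj0) Sg0 mulr0 if_same.
by rewrite Ha // Hb // !eqxx eq_sym.
Qed.

Lemma mul_pureL a b A k : pureM a 0 A -> (k < n)%N ->
  phi (sm_mul n lam a b k) = A * phi (b k).
Proof.
move=> Ha kn; have n0 : (0 < n)%N by apply: leq_ltn_trans kn.
rewrite phi_sm_mul (bigD1_seq 0%N) ?iota_uniq ?mem_iota //=.
rewrite [X in _ + X]big1_seq ?addr0; last first.
  move=> i /andP[ii0 ]; rewrite mem_iota add0n => iin.
  by apply: big1 => j _; rewrite Ha // (negbTE ii0) mul0r.
rewrite big_mkcond (bigD1_seq k) ?iota_uniq ?mem_iota //=.
rewrite [X in _ + X]big1_seq ?addr0; last first.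
  move=> j /andP[jk ]; rewrite mem_iota add0n => jn.
  by rewrite modn_small // (negbTE jk).
by rewrite modn_small // eqxx Ha // Sg_0.
Qed.

Lemma mul_pureR a b B k : pureM b 0 B -> (forall i, Sg i B = B) -> (k < n)%N ->
  phi (sm_mul n lam a b k) = phi (a k) * B.
Proof.
move=> Hb HB kn; have n0 : (0 < n)%N by apply: leq_ltn_trans kn.
rewrite phi_sm_mul (bigD1_seq k) ?iota_uniq ?mem_iota //=.
rewrite [X in _ + X]big1_seq ?addr0; last first.
  move=> i /andP[ik ]; rewrite mem_iota add0n => iin.
  rewrite big_mkcond; apply: big1_seq => j; rewrite mem_iota add0n => jn.
  rewrite Hb //; case: (eqVneq j 0%N) => [Ej|nj].
    by rewrite Ej addn0 modn_small ?(negbTE ik) //; case/andP: iin.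
  by rewrite Sg0 mulr0 if_same.
rewrite big_mkcond (bigD1_seq 0%N) ?iota_uniq ?mem_iota //=.
rewrite [X in _ + X]big1_seq ?addr0; last first.
  move=> j /andP[jk ]; rewrite mem_iota add0n => jn.
  by rewrite Hb // (negbTE jk) Sg0 mulr0 if_same.
by rewrite addn0 modn_small // eqxx Hb // HB.
Qed.
End Sm.
Section Alg.
Variable F : fieldType.
Notation M := {malg F[wordM]}.
Notation phi := (@phi F).
Notation J := (@J F).
Definition eqJ (g h : M) := J (g - h).
Local Infix "~=" := eqJ (at level 70).

Lemma eqJ_refl g : g ~= g.
Proof. by rewrite /eqJ subrr; apply: J0. Qed.
Lemma eqJ_sym g h : g ~= h -> h ~= g.
Proof. by move=> H; rewrite /eqJ -opprB; apply: JN. Qed.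
Lemma eqJ_trans g h k : g ~= h -> h ~= k -> g ~= k.
Proof. by move=> H1 H2; rewrite /eqJ -(subrKA h); apply: JD. Qed.
Lemma eqJ_add g g' h h' : g ~= g' -> h ~= h' -> g + h ~= g' + h'.
Proof. by move=> H1 H2; rewrite /eqJ opprD addrACA; apply: JD. Qed.
Lemma eqJ_mull a g g' : g ~= g' -> a * g ~= a * g'.
Proof. by move=> H; rewrite /eqJ -mulrBr; apply: JMl. Qed.
Lemma eqJ_mulr a g g' : g ~= g' -> g * a ~= g' * a.
Proof. by move=> H; rewrite /eqJ -mulrBl; apply: JMr. Qed.
Lemma eqJ_mul g g' h h' : g ~= g' -> h ~= h' -> g * h ~= g' * h'.
Proof. by move=> H1 H2; apply: eqJ_trans (eqJ_mulr _ H1) (eqJ_mull _ H2). Qed.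
Lemma eqJ_scale c g g' : g ~= g' -> c *: g ~= c *: g'.
Proof. by move=> H; rewrite /eqJ -scalerBr; apply: JZ. Qed.
Lemma eqJ_eq g h : g = h -> g ~= h.
Proof. by move=> ->; apply: eqJ_refl. Qed.

Lemma scaleU (c x : F) (w : wordM) : c *: << x *g w >> = << c * x *g w >>.
Proof. by apply/malgP => k; rewrite mcoeffZ !mcoeffU mulrnAr. Qed.

Lemma mulC_r (c : F) (h : M) : h * c%:MP = c *: h.
Proof.
rewrite malgM_def fgmulgU [in RHS](monalgE h) scaler_sumr.
by apply: eq_bigr => k _; rewrite scaleU mulm1 mulrC.
Qed.

Lemma scalerAr' (c : F) (g h : M) : g * (c *: h) = c *: (g * h).
Proof. by rewrite -mulC_r mulrA mulC_r. Qed.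
End Alg.


Lemma zid (V : zmodType) (a b c d e f : V) :
  a + b - (c + d) = e + a - (d + f) + (b + f - (e + c)).
Proof.
apply/eqP; rewrite -subr_eq0; apply/eqP.
rewrite !opprD !opprK !addrA.
pose s := [:: a; b; -c; -d; -e; -a; d; f; -b; -f; e; c].
have -> : a + b - c - d - e - a + d + f - b - f + e + c = \sum_(i <- iota 0 12) nth 0 s i.
  by rewrite /= !big_cons big_nil addr0 !addrA.
rewrite (perm_big [:: 0; 5; 1; 8; 11; 2; 6; 3; 10; 4; 7; 9]%N) //=.
by rewrite !big_cons big_nil addr0 !addrA !(subrr, add0r).
Qed.

Section Rel.
Variable F : fieldType.
Notation M := {malg F[wordM]}.
Notation phi := (@phi F).
Local Infix "~=" := (@eqJ F) (at level 70).
Definition X : M := phi (@fa_gen F gx).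
Definition Y : M := phi (@fa_gen F gy).
Definition Z : M := phi (@fa_gen F gz).

Lemma R0 : X * X ~= 0.
Proof. rewrite /eqJ subr0 -(_ : R F (@Ordinal 5 0 isT) = X * X); first exact: JR.
by rewrite /R /C_rel /= phi_mul. Qed.
Lemma R2 : Z * Z ~= 0.
Proof. rewrite /eqJ subr0 -(_ : R F (@Ordinal 5 2 isT) = Z * Z); first exact: JR.
by rewrite /R /C_rel /= phi_mul. Qed.

Lemma Ycomm : Y * (X * Z + Z * X) ~= (X * Z + Z * X) * Y.
Proof.
rewrite /eqJ; have -> : Y * (X * Z + Z * X) - (X * Z + Z * X) * Y =
   R F (@Ordinal 5 3 isT) + R F (@Ordinal 5 4 isT).
  rewrite /R /C_rel /= /fa_comm /fa_sub /fa_anticomm /fa_add.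
  rewrite !(phi_cat, phi_mul, phi_opp) -/X -/Y -/Z.
  rewrite !mulrDl !mulrDr !mulrA; exact: (@zid M (Y*X*Z) (Y*Z*X) (X*Z*Y) (Z*X*Y) (X*Y*Z) (Z*Y*X)).
by apply: JD; apply: JR.
Qed.

Lemma pow_comm (g a : M) c m : g * a ~= c *: (a * g) ->
  g * a ^+ m ~= c ^+ m *: (a ^+ m * g).
Proof.
move=> H; elim: m => [|m IH].
  by apply: eqJ_eq; rewrite !expr0 mulr1 mul1r scale1r.
rewrite exprSr mulrA.
have H1 := eqJ_mulr a IH.
apply: (eqJ_trans H1).
rewrite -(scalerAl (c ^+ m) (a ^+ m * g) a) -[a ^+ m * g * a]mulrA.
have H2 := eqJ_scale (c ^+ m) (eqJ_mull (a ^+ m) H).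
apply: (eqJ_trans H2).
by apply: eqJ_eq; rewrite scalerAr' scalerA -exprSr mulrA.
Qed.

End Rel.

Section Rel2.
Variable F : fieldType.
Notation M := {malg F[wordM]}.
Local Infix "~=" := (@eqJ F) (at level 70).
Notation X := (@X F). Notation Y := (@Y F). Notation Z := (@Z F).

Lemma expand4 (P Q A B : M) (k mu : F) : (P + k *: Q) * (A + mu *: B) =
  (P * A + mu *: (P * B)) + (k *: (Q * A) + (k * mu) *: (Q * B)).
Proof. by rewrite mulrDl !mulrDr -!scalerAl !scalerAr' scalerA. Qed.

Lemma mul4 (P A B C D : M) : P * (A * B) * (C * D) = P * A * (B * C) * D.
Proof. rewrite [in LHS]mulrA [P * (A * B)]mulrA [P * A * (B * C)]mulrA; reflexivity. Qed.

Lemma binom (X Z : M) (R0 : X * X ~= 0) (R2 : Z * Z ~= 0) (mu : F) m :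
  (X * Z + mu *: (Z * X)) ^+ m.+1 ~=
  (X * Z) ^+ m.+1 + mu ^+ m.+1 *: (Z * X) ^+ m.+1.
Proof.
elim: m => [|m IH]; first by apply: eqJ_eq; rewrite !expr1.
rewrite [_ ^+ m.+2]exprSr.
apply: (eqJ_trans (eqJ_mulr (X * Z + mu *: (Z * X)) IH)).
rewrite (expand4 ((X * Z) ^+ m.+1) ((Z * X) ^+ m.+1) (X * Z) (Z * X) (mu ^+ m.+1) mu).
have T1 : (X * Z) ^+ m.+1 * (Z * X) ~= 0.
  have -> : (X * Z) ^+ m.+1 * (Z * X) = (X * Z) ^+ m * X * (Z * Z) * X.
    rewrite exprSr; exact: mul4.
  have -> : (0 : M) = (X * Z) ^+ m * X * 0 * X by rewrite mulr0 mul0r.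
  by apply: eqJ_mulr; apply: eqJ_mull; apply: R2.
have T2 : (Z * X) ^+ m.+1 * (X * Z) ~= 0.
  have -> : (Z * X) ^+ m.+1 * (X * Z) = (Z * X) ^+ m * Z * (X * X) * Z.
    rewrite exprSr; exact: mul4.
  have -> : (0 : M) = (Z * X) ^+ m * Z * 0 * Z by rewrite mulr0 mul0r.
  by apply: eqJ_mulr; apply: eqJ_mull; apply: R0.
have E : (X * Z) ^+ m.+2 + mu ^+ m.+2 *: (Z * X) ^+ m.+2 =
   ((X * Z) ^+ m.+1 * (X * Z) + mu *: 0) + (mu ^+ m.+1 *: 0 + (mu ^+ m.+1 * mu) *: ((Z * X) ^+ m.+1 * (Z * X))).
  rewrite !scaler0 addr0 add0r [(X * Z) ^+ m.+2]exprSr [(Z * X) ^+ m.+2]exprSr [mu ^+ m.+2]exprSr; reflexivity.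
rewrite E.
apply: eqJ_add; [apply: eqJ_add; [exact: eqJ_refl | exact: (eqJ_scale mu T1)] |
  apply: eqJ_add; [exact: (eqJ_scale (mu ^+ m.+1) T2) | exact: eqJ_refl]].
Qed.

Lemma phi_cons (t : F * word) (p : FA F) : phi (t :: p) = << t.1 *g (t.2 : wordM) >> + phi p.
Proof. by rewrite /phi big_cons. Qed.

Lemma gen_eq (i : 'I_3) : << (1 : F) *g ([:: i] : wordM) >> = phi (@fa_gen F i).
Proof. by rewrite /phi big_seq1. Qed.

Lemma cen_mul (P G H : M) : P * G ~= G * P -> P * H ~= H * P -> P * (G * H) ~= (G * H) * P.
Proof.
move=> HG HH; rewrite mulrA.
apply: (eqJ_trans (eqJ_mulr H HG)); rewrite -mulrA -[G * H * P]mulrA.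
exact: eqJ_mull.
Qed.

Lemma cen_ext (P : M) : P * X ~= X * P -> P * Y ~= Y * P -> P * Z ~= Z * P ->
  forall V, P * V ~= V * P.
Proof.
move=> HX HY HZ.
have Hw : forall w : wordM, P * << (1 : F) *g w >> ~= << (1 : F) *g w >> * P.
  elim=> [|i w IH].
    have E1 : << (1 : F) *g ([::] : wordM) >> = 1 := erefl.
    rewrite E1 mulr1 mul1r; exact: eqJ_refl.
  have E2 : << (1 : F) *g ((i :: w) : wordM) >> =
        << (1 : F) *g ([:: i] : wordM) >> * << (1 : F) *g w >>.
    by rewrite UU mulr1.
  rewrite E2; clear E2; apply: cen_mul; last exact: IH.
  rewrite gen_eq.
  case: i => [[|[|[|k]]] Hk]; last by exfalso; move: Hk.
  - rewrite (_ : Ordinal Hk = gx); [exact: HX | exact: val_inj].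
  - rewrite (_ : Ordinal Hk = gy); [exact: HY | exact: val_inj].
  - rewrite (_ : Ordinal Hk = gz); [exact: HZ | exact: val_inj].
move=> V; rewrite -(phiK V); elim: (psi V) => [|t p IH].
  rewrite /phi big_nil mulr0 mul0r; exact: eqJ_refl.
rewrite phi_cons mulrDr mulrDl; apply: eqJ_add; last exact: IH.
have E3 : << t.1 *g (t.2 : wordM) >> = t.1 *: << (1 : F) *g (t.2 : wordM) >>.
  by rewrite scaleU mulr1.
rewrite E3 scalerAr' -scalerAl; apply: eqJ_scale; exact: Hw.
Qed.

Lemma add0J (h g : M) : g ~= 0 -> g + h ~= h.
Proof. move=> H; rewrite -[X in _ ~= X]add0r; apply: eqJ_add; [exact: H | exact: eqJ_refl]. Qed.
Lemma addJ0 (h g : M) : g ~= 0 -> h + g ~= h.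
Proof. move=> H; rewrite -[X in _ ~= X]addr0; apply: eqJ_add; [exact: eqJ_refl | exact: H]. Qed.
Lemma scaleJ0 c (g : M) : g ~= 0 -> c *: g ~= 0.
Proof. move=> H; rewrite -(scaler0 M c); exact: eqJ_scale. Qed.
Lemma mulJ0r (g h : M) : g ~= 0 -> g * h ~= 0.
Proof. move=> H; rewrite -(mul0r h); exact: eqJ_mulr. Qed.
Lemma mulJ0l (g h : M) : g ~= 0 -> h * g ~= 0.
Proof. move=> H; rewrite -(mulr0 h); exact: eqJ_mull. Qed.

Section Cent.
Variable lam : F.
Hypothesis lam0 : lam != 0.
Definition aa : M := X * Z + lam *: (Z * X).

Lemma Xa : X * aa ~= lam *: (aa * X).
Proof.
have E1 : X * aa = (X * X) * Z + lam *: (X * Z * X).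
  rewrite /aa mulrDr scalerAr' !mulrA; reflexivity.
have E2 : lam *: (aa * X) = lam *: (X * Z * X) + (lam * lam) *: (Z * (X * X)).
  rewrite /aa mulrDl -scalerAl scalerDr scalerA !mulrA; reflexivity.
rewrite E1 E2.
apply: (eqJ_trans (add0J _ (mulJ0r Z (@R0 F)))).
apply: eqJ_sym; apply: addJ0; apply: scaleJ0; apply: mulJ0l; exact: (@R0 F).
Qed.

Lemma Za : Z * aa ~= lam^-1 *: (aa * Z).
Proof.
have E1 : Z * aa = Z * X * Z + lam *: ((Z * Z) * X).
  rewrite /aa mulrDr scalerAr' !mulrA; reflexivity.
have E2 : lam^-1 *: (aa * Z) = lam^-1 *: (X * (Z * Z)) + Z * X * Z.
  rewrite /aa mulrDl -scalerAl scalerDr scalerA (mulVf lam0) scale1r !mulrA; reflexivity.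
rewrite E1 E2.
apply: (eqJ_trans (addJ0 _ (scaleJ0 _ (mulJ0r X (@R2 F))))).
apply: eqJ_sym; apply: add0J; apply: scaleJ0; apply: mulJ0l; exact: (@R2 F).
Qed.

Variable n : nat.
Hypothesis lamn : lam ^+ n.+1 = 1.

Lemma an_central V : aa ^+ n.+1 * V ~= V * aa ^+ n.+1.
Proof.
apply: cen_ext.
- apply: eqJ_sym.
  have H := pow_comm n.+1 Xa; rewrite lamn scale1r in H; exact: H.
- pose s := X * Z + Z * X.
  have Hs : aa ^+ n.+1 ~= s ^+ n.+1.
    apply: (eqJ_trans (binom (@R0 F) (@R2 F) lam n)).
    rewrite lamn; apply: eqJ_sym.
    have H := binom (@R0 F) (@R2 F) 1 n; rewrite scale1r expr1n in H; exact: H.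
  have HY : Y * s ~= 1 *: (s * Y) by rewrite scale1r; exact: (@Ycomm F).
  have H := pow_comm n.+1 HY; rewrite expr1n scale1r in H.
  apply: (eqJ_trans (eqJ_mulr Y Hs)).
  apply: (eqJ_trans (eqJ_sym H)).
  exact: (eqJ_mull Y (eqJ_sym Hs)).
- apply: eqJ_sym.
  have H := pow_comm n.+1 Za; rewrite exprVn lamn invr1 scale1r in H; exact: H.
Qed.
End Cent.
End Rel2.


Section Pipe.
Variable F : fieldType.
Notation M := {malg F[wordM]}.
Variables (n : nat) (lam : F).
Hypothesis prim : n.-primitive_root lam.
Local Notation X := (@X F). Local Notation Z := (@Z F). Local Notation aa := (@aa F).

Lemma n_gt0 : (0 < n)%N. Proof. exact: prim_order_gt0 prim. Qed.
Lemma lamn : lam ^+ n = 1. Proof. exact: prim_expr_order prim. Qed.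
Lemma lam0 : lam != 0.
Proof. apply/eqP => l0; have := lamn; rewrite l0 expr0n.
by case: n n_gt0 => // m _ /eqP; rewrite eq_sym oner_eq0. Qed.

Lemma Sg_gen i (g : 'I_3) :
  Sg lam i (phi (@fa_gen F g)) =
  (lam ^+ (i * count_mem gz [:: g]) / lam ^+ (i * count_mem gx [:: g])) *: phi (@fa_gen F g).
Proof.
rewrite -phi_sig /sigma_pow /phi /= !big_seq1 /= scaleU mulr1 mul1r.
reflexivity.
Qed.

Lemma SgXv i : Sg lam i X = (lam ^+ i)^-1 *: X.
Proof. rewrite /X Sg_gen /= !muln0 muln1 expr0 mul1r; reflexivity. Qed.
Lemma SgZv i : Sg lam i Z = lam ^+ i *: Z.
Proof. rewrite /Z Sg_gen /= !muln0 muln1 expr0 divr1; reflexivity. Qed.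

Lemma Sg_aa i : Sg lam i (aa lam) = aa lam.
Proof.
have li : lam ^+ i != 0 by rewrite expf_neq0 // lam0.
rewrite /aa SgD SgZ !SgM SgXv SgZv.
rewrite -!scalerAl !scalerAr' !scalerA (mulVf li) -mulrA (mulfV li) mulr1 scale1r.
reflexivity.
Qed.

Lemma pure_x : pureM n (x' F) 0 X.
Proof. move=> i _; rewrite /x' /sm_pure; case: (i == 0%N); [reflexivity | exact: phi0]. Qed.
Lemma pure_z : pureM n (z' F n) n.-1 Z.
Proof. move=> i _; rewrite /z' /sm_pure; case: (i == n.-1); [reflexivity | exact: phi0]. Qed.

Lemma n1n : (n.-1 < n)%N. Proof. by rewrite ltn_predL n_gt0. Qed.

Lemma inv_lam : (lam ^+ n.-1)^-1 = lam.
Proof.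
have ln : lam ^+ n.-1 != 0 by rewrite expf_neq0 // lam0.
have E : lam ^+ n.-1 * lam = 1 by rewrite -exprSr prednK ?n_gt0 // lamn.
by rewrite -[RHS](mulKf ln lam) E mulr1.
Qed.

Definition w := sm_add (sm_mul n lam (x' F) (z' F n)) (sm_mul n lam (z' F n) (x' F)).

Lemma pure_w : pureM n w n.-1 (aa lam).
Proof.
have H1 := pure_mul lam (n_gt0) n1n pure_x pure_z.
have H2 := pure_mul lam n1n (n_gt0) pure_z pure_x.
rewrite add0n addn0 modn_small ?n1n // in H1 H2.
move=> i ilt; rewrite /w /sm_add phi_cat (H1 i ilt) (H2 i ilt).
case: (i == n.-1); last by rewrite addr0.
rewrite Sg_0 SgXv scalerAr' inv_lam; reflexivity.
Qed.

Lemma pure_pow m : pureM n (sm_pow n lam w m) ((m * n.-1) %% n)%N (aa lam ^+ m).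
Proof.
elim: m => [|m IH].
  rewrite mul0n mod0n expr0 => i _; rewrite /sm_pow /= /sm_one.
  case: (i == 0%N); [exact: phi_one | exact: phi0].
have H := pure_mul lam n1n (ltn_pmod _ n_gt0) pure_w IH.
rewrite modnDmr -mulSn SgX Sg_aa -exprS in H.
exact: H.
Qed.

Lemma pure_W : pureM n (sm_pow n lam w n) 0 (aa lam ^+ n).
Proof. by have := pure_pow n; rewrite modnMr. Qed.

Lemma final : sm_central n lam (sm_pow n lam w n).
Proof.
move=> v k kn; apply: J_Ceq.
have HB : forall i, Sg lam i (aa lam ^+ n) = aa lam ^+ n.
  by move=> i; rewrite SgX Sg_aa.
rewrite (mul_pureL lam v pure_W kn) (mul_pureR v pure_W HB kn).
have := lamn; have := n_gt0; case: n => // n' _ ln.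
exact: (an_central lam0 ln (phi (v k))).
Qed.
End Pipe.

Theorem mainTheorem17 (n : nat) (lam : CC) :
  n.-primitive_root lam ->
  sm_central n lam
    (sm_pow n lam (sm_add (sm_mul n lam (x' CC) (z' CC n))
                          (sm_mul n lam (z' CC n) (x' CC))) n).
Proof. move=> prim; exact: (final prim). Qed.
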